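(* Let $\vec e$ be a finite set of input-output examples and let $\mathcal{P}_i\subseteq\mathcal{U}$ be a set of predicates. Let $\Pi_i$ be a program returned by the ranking step in iteration $i$ of the synthesis loop, so $\Pi_i\in\mathcal{L}(\mathcal{A}_{\mathcal{P}_i})$, and suppose $\Pi_i$ does not satisfy some example $e=(e_{in},e_{out})\in\vec e$. Let $\mathcal{I}$ be a proof of incorrectness of $\Pi_i$ with respect to $e$, and let $\mathcal{P}_{i+1}=\mathcal{P}_i\cup\{\text{predicates occurring in } \mathcal{I}\}$. Then $\Pi_i\notin\mathcal{L}(\mathcal{A}_{\mathcal{P}_{i+1}})$ and $\mathcal{L}(\mathcal{A}_{\mathcal{P}_{i+1}})\subsetneq\mathcal{L}(\mathcal{A}_{\mathcal{P}_i})$.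
   Context: A DSL is given by a context-free grammar $G$ with start symbol $s_0$. Each production has the form $s\to t$ with $t$ a terminal, which is either the program input variable $x$ or a constant, or $s\to f(s_1,\dots,s_n)$ with $f$ a function symbol. Programs are finite ASTs derived from $s_0$, with leaves labelled by terminals and internal nodes labelled by function symbols. Concrete semantics: $[\![x]\!]c=c$; $[\![t]\!]$ is the fixed value of a constant $t$; $[\![f(\Pi_1,\dots,\Pi_n)]\!]c=[\![f]\!]([\![\Pi_1]\!]c,\dots,[\![\Pi_n]\!]c)$. An example is $e=(e_{in},e_{out})$, and $\Pi$ satisfies $e$ iff $[\![\Pi]\!]e_{in}=e_{out}$. A predicate over a grammar symbol $s$ is a formula with sole free variable $s$. An abstract value is a conjunction of predicates ($\mathit{true}$ is the empty conjunction). $\gamma(\varphi)$ is the set of values satisfying $\varphi$, and $\varphi\sqsubseteq\varphi'$ iff $\varphi\Rightarrow\varphi'$. For a set $\mathcal{P}$ of predicates, $\alpha^{\mathcal{P}}(\varphi)$ is the conjunction of all $p\in\mathcal{P}$ (over the relevant symbol) with $\varphi\Rightarrow p$. $\mathcal{U}$ is a fixed universe of predicates, and an abstract value over $\mathcal{U}$ is a conjunction of predicates from $\mathcal{U}$. For each production $s\to f(s_1,\dots,s_n)$, an abstract transformer gives an abstract value $[\![f(\varphi_1,\dots,\varphi_n)]\!]^\#$ over $s$. It is sound: $c_i\in\gamma(\varphi_i)$ implies $[\![f]\!](c_1,\dots,c_n)\in\gamma([\![f(\varphi_1,\dots,\varphi_n)]\!]^\#)$. It is monotone: $\varphi_i\sqsubseteq\varphi_i'$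 for all $i$ implies $[\![f(\vec\varphi)]\!]^\#\sqsubseteq[\![f(\vec\varphi')]\!]^\#$. Abstract evaluation $\mathrm{EvalAbstract}(\Pi,c,\mathcal{P})$ is defined recursively: for a leaf $x$ it is $\alpha^{\mathcal{P}}(x=c)$; for a leaf constant $t$ it is $\alpha^{\mathcal{P}}(t=[\![t]\!])$; for a node $f$ with subtrees $\Pi_1,\dots,\Pi_n$ it is $\alpha^{\mathcal{P}}([\![f(\mathrm{EvalAbstract}(\Pi_1,c,\mathcal{P}),\dots,\mathrm{EvalAbstract}(\Pi_n,c,\mathcal{P}))]\!]^\#)$. The abstract finite tree automaton (AFTA) $\mathcal{A}_{\mathcal{P}}$ built from $G$, $\vec e$ and $\mathcal{P}$ has states $q_s^{\vec\varphi}$, where $\vec\varphi$ holds one abstract value per example. Each program $\Pi$ reaches the state whose $j$-th component is $\mathrm{EvalAbstract}(\Pi,e_{j,in},\mathcal{P})$. A state $q_{s_0}^{\vec\varphi}$ is final iff $e_{j,out}\in\gamma(\varphi_j)$ for every example $e_j\in\vec e$. Hence its language is $\mathcal{L}(\mathcal{A}_{\mathcal{P}})=\{\Pi : e_{j,out}\in\gamma(\mathrm{EvalAbstract}(\Pi,e_{j,in},\mathcal{P}))\text{ for all } e_j\in\vec e\}$. A proof of incorrectness of $\Pi$ with respect to $e$ is a map $\mathcal{I}$ from nodes of $\Pi$ to abstract values over $\mathcal{U}$ satisfying three conditions: (1) for every leaf $v$ with terminal $t$, $(t=[\![t]\!]e_{in})\sqsubseteq\mathcal{I}(v)$, where $[\![x]\!]e_{in}=e_{in}$;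 (2) for every internal node $v$ labelled $f$ with children $v_1,\dots,v_n$, $[\![f(\mathcal{I}(v_1),\dots,\mathcal{I}(v_n))]\!]^\#\sqsubseteq\mathcal{I}(v)$; (3) $e_{out}\notin\gamma(\mathcal{I}(\mathrm{root}(\Pi)))$. *)

(* Defs.v *)
From Stdlib Require Import List.
Import ListNotations.
Set Implicit Arguments.

Record DSL := mkDSL {
  Sym : Type;
  Fn : Type;
  Const : Type;
  Val : Type;
  Pred : Type;
  s0 : Sym;
  leafprod : Sym -> option Const -> Prop;
      (* production s -> t; the terminal [None] is the input variable x,
         [Some k] is the constant k *)
  nodeprod : Sym -> Fn -> list Sym -> Prop;
  fsem : Fn -> list Val -> Val;
  csem : Const -> Val;
  psym : Pred -> Sym;
  psem : Pred -> Val -> Prop;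
  U : Pred -> Prop;
  absT : Sym -> Fn -> list Sym -> list (Pred -> Prop) -> (Pred -> Prop)
}.

Section Defs.
Variable D : DSL.

(** Abstract values: conjunctions of predicates, represented as the set of
    conjuncts. [true] is the empty set. *)
Definition absval := Pred D -> Prop.

Definition gamma (phi : absval) : Val D -> Prop :=
  fun v => forall p, phi p -> psem D p v.

Definition absle (phi phi' : absval) : Prop :=
  forall v, gamma phi v -> gamma phi' v.

Definition over_U (s : Sym D) (phi : absval) : Prop :=
  forall p, phi p -> U D p /\ psym D p = s.

(** alpha^P of a formula over s, given semantically by its set of models *)
Definition alpha (P : Pred D -> Prop) (s : Sym D) (phi : Val D -> Prop) : absval :=
  fun p => P p /\ psym D p = s /\ (forall v, phi v -> psem D p v).

(** Programs: ASTs whose nodes are annotated with the grammar symbol they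
    are derived from. *)
Inductive prog : Type :=
| Leaf : Sym D -> option (Const D) -> prog
| Node : Sym D -> Fn D -> list prog -> prog.

Definition rootsym (t : prog) : Sym D :=
  match t with Leaf s _ => s | Node s _ _ => s end.

Fixpoint wf (t : prog) : Prop :=
  match t with
  | Leaf s tm => leafprod D s tm
  | Node s f ch =>
      nodeprod D s f (map rootsym ch) /\
      (fix wfl (l : list prog) : Prop :=
         match l with nil => True | c :: l' => wf c /\ wfl l' end) ch
  end.

Definition program (t : prog) : Prop := rootsym t = s0 D /\ wf t.

Definition termval (tm : option (Const D)) (c : Val D) : Val D :=
  match tm with None => c | Some k => csem D k end.

Fixpoint eval (t : prog) (c : Val D) : Val D :=
  match t with
  | Leaf _ tm => termval tm c
  | Node _ f ch => fsem D f (map (fun u => eval u c) ch)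
  end.

Definition example := (Val D * Val D)%type.

Definition satisfies (t : prog) (e : example) : Prop := eval t (fst e) = snd e.

Fixpoint evalAbstract (t : prog) (c : Val D) (P : Pred D -> Prop) : absval :=
  match t with
  | Leaf s tm => alpha P s (fun v => v = termval tm c)
  | Node s f ch =>
      alpha P s (gamma (absT D s f (map rootsym ch)
                         (map (fun u => evalAbstract u c P) ch)))
  end.

Definition langAFTA (exs : list example) (P : Pred D -> Prop) (t : prog) : Prop :=
  program t /\ forall e, In e exs -> gamma (evalAbstract t (fst e) P) (snd e).

(** Nodes of a program, addressed by paths from the root. *)
Fixpoint subtree (t : prog) (v : list nat) : option prog :=
  match v with
  | nil => Some t
  | k :: v' =>
      match t with
      | Leaf _ _ => None
      | Node _ _ ch =>
          match nth_error ch k with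
          | Some u => subtree u v'
          | None => None
          end
      end
  end.

Definition is_node (t : prog) (v : list nat) : Prop := subtree t v <> None.

Definition proof_of_incorrectness (t : prog) (e : example)
  (I : list nat -> absval) : Prop :=
  (forall v u, subtree t v = Some u -> over_U (rootsym u) (I v)) /\
  (forall v s tm, subtree t v = Some (Leaf s tm) ->
     (* (t = [[t]] e_in) ⊑ I(v), i.e. [[t]] e_in ∈ γ(I(v)) *)
     gamma (I v) (termval tm (fst e))) /\
  (forall v s f ch, subtree t v = Some (Node s f ch) ->
     absle (absT D s f (map rootsym ch)
              (map (fun k => I (v ++ [k])) (seq 0 (length ch))))
           (I v)) /\
  ~ gamma (I nil) (snd e).

Definition transformers_ok : Prop :=
  (forall s f ss, nodeprod D s f ss ->
     forall phis, length phis = length ss ->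
     over_U s (absT D s f ss phis)) /\
  (forall s f ss, nodeprod D s f ss ->
     forall phis cs, length phis = length ss -> length cs = length ss ->
     (forall i phi c, nth_error phis i = Some phi -> nth_error cs i = Some c ->
        nth_error ss i <> None -> over_U (nth i ss (s0 D)) phi /\ gamma phi c) ->
     gamma (absT D s f ss phis) (fsem D f cs)) /\
  (forall s f ss, nodeprod D s f ss ->
     forall phis phis', length phis = length ss -> length phis' = length ss ->
     (forall i phi phi', nth_error phis i = Some phi ->
        nth_error phis' i = Some phi' ->
        over_U (nth i ss (s0 D)) phi /\ over_U (nth i ss (s0 D)) phi' /\
        absle phi phi') ->
     absle (absT D s f ss phis) (absT D s f ss phis')).

End Defs.

(* Main.v *)
Require Import Defs.
From Stdlib Require Import List.
Import ListNotations.

Section Aux.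
Variable D : DSL.

Definition incl' (phi psi : absval D) := forall p, phi p -> psi p.

Lemma incl_absle (phi psi : absval D) : incl' phi psi -> absle psi phi.
Proof. unfold incl', absle, gamma; eauto. Qed.

Lemma prog_ind' (P : prog D -> Prop)
  (HL : forall s tm, P (@Leaf D s tm))
  (HN : forall s f ch, Forall P ch -> P (@Node D s f ch)) : forall t, P t.
Proof.
  fix IH 1. intros [s tm|s f ch]. apply HL. apply HN.
  induction ch as [|c ch IHch]; constructor; auto.
Qed.

Lemma wf_node s f ch : wf (@Node D s f ch) -> nodeprod D s f (map (@rootsym D) ch) /\ Forall (@wf D) ch.
Proof.
  simpl. intros [H1 H2]. split; auto. clear H1.
  induction ch as [|c ch IHch]; constructor; destruct H2; auto.
Qed.

Lemma eval_overU (P : Pred D -> Prop) (HP : forall p, P p -> U D p) t c :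
  over_U (rootsym t) (evalAbstract t c P).
Proof.
  destruct t; simpl; intros p [H1 [H2 _]]; auto.
Qed.

Lemma nth_map_rootsym (ch : list (prog D)) i u :
  nth_error ch i = Some u -> nth i (map (@rootsym D) ch) (s0 D) = rootsym u.
Proof.
  intro H. apply nth_error_nth. rewrite nth_error_map, H. reflexivity.
Qed.

Lemma nth_map_inv {A B} (f : A -> B) l i y :
  nth_error (map f l) i = Some y -> exists x, nth_error l i = Some x /\ y = f x.
Proof.
  rewrite nth_error_map. destruct (nth_error l i); simpl; intro H; inversion H; eauto.
Qed.

Lemma subtree_app (t : prog D) v w :
  subtree t (v ++ w) = match subtree t v with Some u => subtree u w | None => None end.
Proof.
  revert t; induction v as [|k v IH]; intros t; simpl; auto.
  destruct t; auto. destruct (nth_error l k); auto.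
Qed.

Lemma mono_lemma (HT : transformers_ok D) (P Q : Pred D -> Prop)
  (HPQ : forall p, P p -> Q p) (HQ : forall p, Q p -> U D p) :
  forall t, wf t -> forall c, incl' (evalAbstract t c P) (evalAbstract t c Q).
Proof.
  destruct HT as [_ [_ Hmon]].
  induction t as [s tm|s f ch IH] using prog_ind'; intros Hwf c p.
  - simpl. intros [H1 H2]; split; auto.
  - apply wf_node in Hwf as [Hnp Hwfs].
    simpl. intros [H1 [H2 H3]]. split; [auto|split; [auto|]].
    intros w Hw. apply H3. revert w Hw.
    apply (Hmon _ _ _ Hnp); try (rewrite !length_map; reflexivity).
    intros i phi phi' E1 E2.
    destruct (nth_map_inv _ _ _ _ E1) as [u [Eu ->]].
    destruct (nth_map_inv _ _ _ _ E2) as [u' [Eu' ->]].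
    rewrite Eu in Eu'. inversion Eu'; subst u'.
    rewrite (nth_map_rootsym _ _ _ Eu).
    assert (Hin := nth_error_In _ _ Eu).
    rewrite Forall_forall in IH, Hwfs.
    split; [apply eval_overU; auto|split; [apply eval_overU; auto|]].
    apply incl_absle. apply IH; auto.
Qed.

End Aux.

Theorem mainTheorem2 (D : DSL) (HT : transformers_ok D)
  (exs : list (example D)) (Pi : Pred D -> Prop) (HPi : forall p, Pi p -> U D p)
  (t : prog D) (Ht : langAFTA exs Pi t)
  (e : example D) (He : In e exs) (Hne : ~ satisfies t e)
  (I : list nat -> absval D) (HI : proof_of_incorrectness t e I) :
  let Pi1 := fun p => Pi p \/ (exists v, is_node t v /\ I v p) in
  ~ langAFTA exs Pi1 t /\
  (forall t', langAFTA exs Pi1 t' -> langAFTA exs Pi t') /\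
  (exists t', langAFTA exs Pi t' /\ ~ langAFTA exs Pi1 t').
Proof.
  intros Pi1.
  destruct HI as [HI1 [HI2 [HI3 HI4]]].
  assert (HPi1 : forall p, Pi1 p -> U D p).
  { intros p [H|[v [Hv H]]]; auto.
    destruct (subtree t v) as [u|] eqn:E; [|contradiction].
    apply (HI1 _ _ E p H). }
  assert (Key : forall u v, subtree t v = Some u -> wf u ->
            incl' D (I v) (evalAbstract u (fst e) Pi1)).
  { destruct HT as [_ [_ Hmon]].
    induction u as [s tm|s f ch IH] using prog_ind'; intros v Hsub Hwf p Hp.
    - simpl. split; [right; exists v; split; [congruence|auto]|].
      split. { apply (HI1 _ _ Hsub p Hp). }
      intros w ->. apply (HI2 _ _ _ Hsub p Hp).
    - apply wf_node in Hwf as [Hnp Hwfs].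
      simpl. split; [right; exists v; split; [congruence|auto]|].
      split. { apply (HI1 _ _ Hsub p Hp). }
      intros w Hw. apply (HI3 _ _ _ _ Hsub w); auto. revert w Hw.
      apply (Hmon _ _ _ Hnp);
        try (rewrite ?length_map, ?length_seq; reflexivity).
      intros i phi phi' E1 E2.
      destruct (nth_map_inv _ _ _ _ E1) as [u [Eu ->]].
      destruct (nth_map_inv _ _ _ _ E2) as [k [Ek ->]].
      rewrite nth_error_seq in Ek.
      destruct (PeanoNat.Nat.ltb i (length ch)); inversion Ek; subst k; simpl.
      rewrite (nth_map_rootsym _ _ _ _ Eu).
      assert (Hin := nth_error_In _ _ Eu).
      rewrite Forall_forall in IH, Hwfs.
      assert (Hs : subtree t (v ++ [i]) = Some u).
      { rewrite subtree_app, Hsub. simpl. rewrite Eu. reflexivity. }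
      split; [apply eval_overU; auto|split; [apply (HI1 _ _ Hs)|]].
      apply incl_absle. apply (IH u Hin _ Hs); auto. }
  assert (Part1 : ~ langAFTA exs Pi1 t).
  { intros [[_ Hwf] Hall]. apply HI4.
    intros p Hp. apply (Hall e He p).
    apply (Key t nil); auto. }
  split; [exact Part1|split].
  - intros t' [Hp Hall]. split; auto.
    intros e' He' p Hp'. apply (Hall e' He').
    apply (mono_lemma D HT Pi Pi1); auto. unfold Pi1; auto. apply Hp.
  - exists t; auto.
Qed.
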